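(* Let $f$ be an intersection of $k$ halfspaces on $\mathbb{R}^n$ and let $\mathcal{D}$ be a distribution on $\mathbb{R}^n$ that is $\rho$-robust with respect to $f$, where $\rho>0$, and suppose $\mathrm{supp}(\mathcal{D})\not\subset f^{-1}(-1)$. Then $\mathcal{D}$ has margin $\frac{1}{2}\rho^2$ with respect to $f$.
   Context: An intersection of $k$ halfspaces is $f(x)=1$ if $w_i\cdot x>\theta_i$ for all $i\in[k]$, $f(x)=-1$ otherwise, with $\|w_i\|_2=1$, $\theta_i\in\mathbb{R}$. Let $R=\sup_{x\in\mathrm{supp}(\mathcal{D})}\|x\|_2$. $\mathcal{D}$ is $\rho$-robust with respect to $f$ if $\inf\{\|x-y\|_2: x\in\mathrm{supp}(\mathcal{D}), y\in\mathbb{R}^n, f(x)\ne f(y)\}/R\ge\rho$. $\mathcal{D}$ has margin $\rho'$ with respect to $f$ if for every $x\in\mathrm{supp}(\mathcal{D})$ with $f(x)=-1$ there is $i\in[k]$ with $(w_i\cdot x-\theta_i)/R\le-\rho'$. *)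

(* Defs.v *)
From HB Require Import structures.
From mathcomp Require Import all_boot all_order all_algebra.
From mathcomp Require Import boolp classical_sets reals.
Set Implicit Arguments. Unset Strict Implicit. Unset Printing Implicit Defensive.
Import Order.TTheory GRing.Theory Num.Theory.
Local Open Scope ring_scope.
Local Open Scope classical_set_scope.

Section Defs.
Variable R : realType.
Variable n : nat.

Definition dotv (u v : 'rV[R]_n) : R := \sum_(j < n) u 0 j * v 0 j.
Definition enorm (u : 'rV[R]_n) : R := Num.sqrt (dotv u u).

Definition hs_inter (k : nat) (w : 'I_k -> 'rV[R]_n) (theta : 'I_k -> R)
  (x : 'rV[R]_n) : R :=
  if [forall i, dotv (w i) x > theta i] then 1 else -1.

Definition radius (S : set 'rV[R]_n) : R := sup [set enorm x | x in S].

(* rho-robustness of (the support S of) D w.r.t. f *)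
Definition robust (S : set 'rV[R]_n) (f : 'rV[R]_n -> R) (rho : R) : Prop :=
  inf [set d | exists x y, S x /\ f x <> f y /\ d = enorm (x - y)] / radius S
    >= rho.

Definition has_margin (S : set 'rV[R]_n) (k : nat) (w : 'I_k -> 'rV[R]_n)
  (theta : 'I_k -> R) (rho' : R) : Prop :=
  forall x, S x -> hs_inter w theta x = -1 ->
    exists i : 'I_k, (dotv (w i) x - theta i) / radius S <= - rho'.

End Defs.

(* Main.v *)
Require Import Defs.
From HB Require Import structures.
From mathcomp Require Import all_boot all_order all_algebra.
From mathcomp Require Import boolp classical_sets reals.
Import Order.TTheory GRing.Theory Num.Theory.
Local Open Scope ring_scope.
Local Open Scope classical_set_scope.

Set Implicit Arguments. Unset Strict Implicit.
Section H.
Variables (R : realType) (n : nat).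
Implicit Types u v : 'rV[R]_n.

Lemma dotvC u v : dotv u v = dotv v u.
Proof. by apply: eq_bigr => j _; rewrite mulrC. Qed.
Lemma dotvDr u v1 v2 : dotv u (v1 + v2) = dotv u v1 + dotv u v2.
Proof. by rewrite /dotv -big_split; apply: eq_bigr => j _; rewrite !mxE mulrDr. Qed.
Lemma dotvZr u c v : dotv u (c *: v) = c * dotv u v.
Proof. by rewrite /dotv mulr_sumr; apply: eq_bigr => j _; rewrite !mxE mulrCA. Qed.
Lemma dotvNr u v : dotv u (- v) = - dotv u v.
Proof. by rewrite -scaleN1r dotvZr mulN1r. Qed.
Lemma dotvBr u v1 v2 : dotv u (v1 - v2) = dotv u v1 - dotv u v2.
Proof. by rewrite dotvDr dotvNr. Qed.
Lemma dotvDl u1 u2 v : dotv (u1 + u2) v = dotv u1 v + dotv u2 v.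
Proof. by rewrite dotvC dotvDr !(dotvC v). Qed.
Lemma dotvZl c u v : dotv (c *: u) v = c * dotv u v.
Proof. by rewrite dotvC dotvZr dotvC. Qed.
Lemma dotvNl u v : dotv (- u) v = - dotv u v.
Proof. by rewrite dotvC dotvNr dotvC. Qed.
Lemma dotv_ge0 u : 0 <= dotv u u.
Proof. by apply: sumr_ge0 => j _; rewrite -expr2 sqr_ge0. Qed.
Lemma enorm_ge0 u : 0 <= enorm u.
Proof. exact: sqrtr_ge0. Qed.
Lemma enorm_sq u : enorm u ^+ 2 = dotv u u.
Proof. by rewrite sqr_sqrtr // dotv_ge0. Qed.
Lemma enormZ c u : enorm (c *: u) = `|c| * enorm u.
Proof. by rewrite /enorm dotvZl dotvZr mulrA -expr2 sqrtrM ?sqr_ge0 // sqrtr_sqr. Qed.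
Lemma enormN u : enorm (- u) = enorm u.
Proof. by rewrite -scaleN1r enormZ normrN normr1 mul1r. Qed.
Lemma enorm1_dot u : enorm u = 1 -> dotv u u = 1.
Proof. by move=> h; rewrite -enorm_sq h expr1n. Qed.
Lemma fpos k (w : 'I_k -> 'rV[R]_n) th y :
  hs_inter w th y <> -1 -> forall i, th i < dotv (w i) y.
Proof. by rewrite /hs_inter; case: ifP => // /forallP h _ i; apply: h. Qed.
Lemma fposE k (w : 'I_k -> 'rV[R]_n) th y :
  (forall i, th i < dotv (w i) y) -> hs_inter w th y = 1.
Proof. by move=> h; rewrite /hs_inter; case: ifP => // /negbT/negP[]; apply/forallP. Qed.
Lemma fnegE k (w : 'I_k -> 'rV[R]_n) th y i :
  dotv (w i) y <= th i -> hs_inter w th y = -1.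
Proof. by move=> h; rewrite /hs_inter; case: ifP => // /forallP /(_ i); rewrite ltNge h. Qed.
End H.
From mathcomp Require Import ring lra.

Theorem lemma2p6 (R : realType) (n k : nat) (w : 'I_k -> 'rV[R]_n)
  (theta : 'I_k -> R) (S : set 'rV[R]_n) (rho : R) :
  (forall i, enorm (w i) = 1) ->
  (exists M : R, forall x, S x -> enorm x <= M) ->
  0 < rho ->
  robust S (hs_inter w theta) rho ->
  (exists x, S x /\ hs_inter w theta x <> -1) ->
  has_margin S w theta (rho ^+ 2 / 2).
Proof.
move=> hw [M hM] hrho hrob [z [Sz fz]] x Sx fx.
set Rd := radius S.
have Rge : forall y, S y -> enorm y <= Rd.
  move=> y Sy; apply: ub_le_sup; last by exists y.
  by exists M => _ [u Su <-]; apply: hM.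
have R0 : 0 < Rd.
  rewrite lt_neqAle (le_trans (enorm_ge0 z) (Rge z Sz)) andbT.
  apply/eqP => hR; move: hrob; rewrite /robust -/Rd -hR invr0 mulr0.
  by rewrite leNgt hrho.
have key : forall a y, S a -> hs_inter w theta a <> hs_inter w theta y ->
    rho * Rd <= enorm (a - y).
  move=> a y Sa ha; move: hrob; rewrite /robust -/Rd ler_pdivlMr // => h.
  apply: (le_trans h); apply: ge_inf; last by exists a, y.
  by exists 0 => _ [? [? [_ [_ ->]]]]; apply: enorm_ge0.
have fz1 := fpos fz.
have hb : forall i, rho * Rd <= dotv (w i) z - theta i.
  move=> i; set s := dotv (w i) z - theta i.
  have s0 : 0 < s by rewrite subr_gt0 fz1.
  have := key z (z - s *: w i) Sz.
  rewrite opprB addrCA subrr addr0 enormZ hw mulr1 gtr0_norm //; apply.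
  idtac.
  rewrite (fposE fz1) (@fnegE _ _ _ _ _ _ i) //.
    by move=> h; lra.
  by rewrite dotvBr dotvZr enorm1_dot // mulr1 /s opprB addrC subrK.
have nxz : enorm (x - z) <= 2 * Rd.
  have hx := Rge x Sx; have hz := Rge z Sz.
  have ex0 := enorm_ge0 x; have ez0 := enorm_ge0 z.
  have d0 := dotv_ge0 (x + z).
  rewrite -ler_sqr ?nnegrE ?enorm_ge0 ?mulr_ge0 //; last exact: ltW. rewrite enorm_sq.
  move: d0; rewrite !dotvDr !dotvDl ?dotvNr ?dotvNl ?opprK !(dotvC z x) -!enorm_sq.
  move=> d0; nra.
have rho2 : rho <= 2.
  have := key x z Sx; rewrite fx (fposE fz1) => h.
  have {}h : rho * Rd <= 2 * Rd by apply: le_trans nxz; apply: h => e; lra.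
  by rewrite -(ler_pM2r R0).
apply: contrapT => hn.
set D := rho * Rd.
have D0 : 0 < D by rewrite mulr_gt0.
have ha : forall i, - (rho * D) / 2 < dotv (w i) x - theta i.
  move=> i; rewrite ltNge; apply/negP => h; apply: hn; exists i.
  rewrite ler_pdivrMr // /D in h *; nra.
set g := fun i => dotv (w i) x - theta i + rho * D / 2.
set de := \big[Order.min/1]_i g i.
have de0 : 0 < de.
  by apply: lt_bigmin => // i _; rewrite /g; have := ha i; lra.
have dle : forall i, de <= g i by move=> i; apply: bigmin_le.
set eta := Num.min (de / (2 * D)) (rho / 4).
have e0 : 0 < eta.
  rewrite lt_min; apply/andP; split; apply: divr_gt0 => //; exact: mulr_gt0.
have e1 : eta * (2 * D) <= de.
  by rewrite -ler_pdivlMr ?mulr_gt0 // /eta ge_min lexx.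
have e2 : eta <= rho / 4 by rewrite /eta ge_min lexx orbT.
set t := rho / 2 - eta.
have t0 : 0 < t by rewrite /t; lra.
have t1 : t <= 1 by rewrite /t; lra.
have := key x (x + t *: (z - x)) Sx.
rewrite opprD addrA subrr add0r enormN enormZ (ger0_norm (ltW t0)) fx.
have fy : hs_inter w theta (x + t *: (z - x)) = 1.
  apply: fposE => i; rewrite dotvDr dotvZr dotvBr.
  have := hb i; have := dle i; rewrite /g => h1 h2.
  have tD : t * D = rho * D / 2 - eta * D by rewrite /t; ring.
  have h3 : 0 <= t * (dotv (w i) z - theta i - D).
    by apply: mulr_ge0; [exact: ltW | rewrite subr_ge0].
  case: (lerP (dotv (w i) x - theta i) 0) => ha0.
    have h4 : 0 <= t * (- (dotv (w i) x - theta i)) by apply: mulr_ge0; [exact: ltW | rewrite oppr_ge0].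
    lra.
  have h4 : 0 <= (1 - t) * (dotv (w i) x - theta i) by apply: mulr_ge0; [rewrite subr_ge0 | exact: ltW].
  have h5 : 0 < t * D by rewrite mulr_gt0.
  lra.
rewrite fy => h.
have {}h : D <= t * enorm (x - z) by rewrite -enormN opprB; apply: h => e; lra.
have h2 : t * enorm (x - z) <= t * (2 * Rd) by rewrite ler_wpM2l //; exact: ltW.
have h3 : 0 < (rho / 2 - t) * Rd by rewrite mulr_gt0 // /t; lra.
move: h h2 h3; rewrite /D; lra.
Qed.
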